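(* Let $\mathcal{G}$ be an $A$-compatible P-graph with associated map $\mu$ satisfying condition ( * ): for every $\ell'\in\{1,\dots,m\}$ and $i\in\{1,\dots,d\}$, every directed path from $j_i$ to $\ell'$ that contains an edge in $\mathcal{E}^-$ goes through $m+1$. Let $k\in\{1,\dots,d+1\}$, $\widetilde B\in\mathcal{B}^k$, $\ell\in\{1,\dots,m+1\}\setminus\widetilde B$, $B=\widetilde B\cup\{\ell\}$. For $\zeta\in\Theta_\mathcal{G}(F,B)$ define \[\mathcal{E}^F_\zeta=\{E\subseteq\zeta\cap\operatorname{im}\mu : (\zeta\setminus E)\cup\mu^*(E)\in\Theta_\mathcal{G}(F,B)\}.\] Then $\mathcal{E}^F_\zeta$ is closed under union: if $E_1,E_2\in\mathcal{E}^F_\zeta$ then $E_1\cup E_2\in\mathcal{E}^F_\zeta$.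
   Context: $R$ is a partially ordered commutative ring. Let $d\ge0$, $m_0,\dots,m_d\ge0$ with $m=m_0+\cdots+m_d$. $A\in R^{m\times m}$, $b\in R^m$: for $i=1,\dots,d$ the rows indexed by $\mathcal{N}_i=\{1+\sum_{j<i}m_j,\dots,\sum_{j\le i}m_j\}$ are zero outside the columns indexed by $\mathcal{N}_i$, where they form a square $A_i$, and the corresponding subvector $b^i$ has at most one nonzero entry; the last $m_0$ rows form an arbitrary $A_0\in R^{m_0\times m}$ with arbitrary $b^0$. $\mathcal{N}=\{1,\dots,m+1\}$, $\mathcal{N}_0=\{m-m_0+1,\dots,m+1\}$, $\mathcal{N}_{d+1}=\{m+1\}$. Fixed $j_i\in\mathcal{N}_i$ with $b_j=0$ for all $j\le m-m_0$, $j\notin\{j_1,\dots,j_d\}$; $F=\{j_1,\dots,j_d,m+1\}$. $\mathcal{B}^k=\{\{w_j:j\in\{1,\dots,d+1\}\setminus\{k\}\}: w_j\in\mathcal{N}_j\}$. A multidigraph $\mathcal{G}=(\mathcal{N},\mathcal{E})$ has source/target maps $s,t$, no self-loops, labeling $\pi\colon\mathcal{E}\to R$, Laplacian $L_{ij}=\sum_{e:s(e)=j,t(e)=i}\pi(e)$ ($i\ne j$), $L_{ii}=-\sum_{k\ne i}L_{ki}$. $\mathcal{G}$ is $A$-compatible if (i) no edge goes from a node in $\mathcal{N}_i$ ($i\ge0$) to a node in $\mathcal{N}_j$ with $i\ne j$, $j\ge1$; (ii) for $\ell\notin F$ the $\ell$-th row of $L$ equals the $\ell$-th row of $(A\,|\,b)$.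 Trees/forests: subgraphs with acyclic underlying undirected graph (connected for trees), rooted at $N$ if $N$ is the only node without outgoing edges; spanning means node set $\mathcal{N}$; forests are identified with edge sets. $\Theta_\mathcal{G}(F,B)$ ($|F|=|B|$): spanning forests with $|B|$ components, each containing a node of $F$ and being a tree rooted at a node of $B$. A cycle is a closed directed path with no repeated nodes. $\mathcal{E}^-=\{e:\pi(e)\in R_{<0}\}$, $\mathcal{E}^+=\{e:\pi(e)\in R_{>0}\}$. $\mathcal{G}$ is a P-graph with associated map $\mu\colon\mathcal{E}^-\to\mathcal{P}(\mathcal{E}^+)$ if (i) $\mathcal{E}=\mathcal{E}^+\sqcup\mathcal{E}^-$; (ii) every cycle contains at most one edge of $\mathcal{E}^-$; (iii) for $e\in\mathcal{E}^-$: (a) $e'\in\mu(e)\Rightarrow s(e')=s(e)$; (b) $e'\in\mu(e)\Rightarrow$ every cycle containing $e'$ contains $t(e)$; (c) $\mu(e)\cap\mu(e')=\emptyset$ for $e\ne e'$; (iv) $\pi(e)+\sum_{e'\in\mu(e)}\pi(e')\in R_{\ge0}$ for all $e\in\mathcal{E}^-$. $\operatorname{im}\mu=\bigcup_e\mu(e)$, and $\mu^*\colon\operatorname{im}\mu\to\mathcal{E}^-$, $\mu^*(e')=e$ if $e'\in\mu(e)$. *)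

(* Defs.v *)
(* Nodes are 0-based: paper node v (1 <= v <= m+1) is the
   ordinal v-1 : 'I_m.+1; paper node m+1 is ord_max. *)
From HB Require Import structures.
From mathcomp Require Import all_boot all_order all_algebra.
Set Implicit Arguments. Unset Strict Implicit. Unset Printing Implicit Defensive.
Import GRing.Theory.
Local Open Scope ring_scope.

Record po_ring (R : comNzRingType) := PoRing {
  po_le : rel R;
  po_refl : reflexive po_le;
  po_anti : antisymmetric po_le;
  po_trans : transitive po_le;
  po_add : forall x y z, po_le x y -> po_le (x + z) (y + z);
  po_mul : forall x y, po_le 0 x -> po_le 0 y -> po_le 0 (x * y) }.

Definition po_lt (R : comNzRingType) (P : po_ring R) (x y : R) : bool :=
  po_le P x y && (x != y).

Definition msum (d : nat) (mb : nat -> nat) : nat := (\sum_(i < d.+1) mb i)%N.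
(* 0-based first index of N_i, i >= 1 : sum_{1 <= j < i} m_j *)
Definition bstart (mb : nat -> nat) (i : nat) : nat := (\sum_(1 <= j < i) mb j)%N.
(* inblk d mb i v : the (0-based) node v lies in N_i, for i = 0, ..., d+1 *)
Definition inblk (d : nat) (mb : nat -> nat) (i v : nat) : bool :=
  if i == 0%N then (msum d mb - mb 0%N <= v <= msum d mb)%N
  else if (i <= d)%N then (bstart mb i <= v < bstart mb i + mb i)%N
  else if i == d.+1 then v == msum d mb else false.

Definition Fset (d m : nat) (jn : nat -> 'I_m.+1) : {set 'I_m.+1} :=
  [set x : 'I_m.+1 | (x == ord_max) || [exists i : 'I_d, x == jn i.+1]].

Section Graphs.
Variables (R : comNzRingType) (E : finType) (n : nat).
Variables (s t : E -> 'I_n) (pi : E -> R).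

Definition lapl_off (i j : 'I_n) : R := \sum_(e | (s e == j) && (t e == i)) pi e.
Definition laplacian : 'M[R]_n :=
  \matrix_(i, j) if i == j then - \sum_(k | k != i) lapl_off k i else lapl_off i j.

Definition dcycle (c : seq E) : bool :=
  [&& c != [::], cycle (fun e f => t e == s f) c & uniq (map s c)].

Definition dpath (u v : 'I_n) (p : seq E) : bool :=
  [&& map s p == belast u (map t p), last u (map t p) == v & uniq (u :: map t p)].

Definition joins (e : E) (u v : 'I_n) : bool :=
  ((s e == u) && (t e == v)) || ((s e == v) && (t e == u)).

Definition ucycle (es : seq E) (vs : seq 'I_n) : bool :=
  [&& (0 < size es)%N, size vs == size es, uniq es, uniq vs &
      all (fun x => joins x.1 x.2.1 x.2.2) (zip es (zip vs (rot 1 vs)))].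

Definition acyclic (Z : {set E}) : Prop :=
  forall es vs, all (fun e => e \in Z) es -> ~~ ucycle es vs.

Definition uadj (Z : {set E}) : rel 'I_n := fun u v => [exists e in Z, joins e u v].
Definition comp (Z : {set E}) (u : 'I_n) : {set 'I_n} := [set w | connect (uadj Z) u w].

Definition Theta (F B : {set 'I_n}) (Z : {set E}) : Prop :=
  [/\ acyclic Z,
      #|[set comp Z u | u : 'I_n]| = #|B| &
      forall u : 'I_n,
        (exists w, w \in comp Z u /\ w \in F) /\
        (exists r, [/\ r \in B, r \in comp Z u &
           forall w, w \in comp Z u -> (~~ [exists e in Z, s e == w]) = (w == r)])].

End Graphs.

Section PGraph.
Variables (R : comNzRingType) (P : po_ring R) (E : finType) (n : nat).
Variables (s t : E -> 'I_n) (pi : E -> R) (mu : E -> {set E}).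

Definition Eneg : pred E := fun e => po_lt P (pi e) 0.
Definition Epos : pred E := fun e => po_lt P 0 (pi e).

(* mu is only meaningful on E^- *)
Definition is_Pgraph : Prop :=
  [/\ (forall e, Epos e || Eneg e),
      (forall c, dcycle s t c -> (count Eneg c <= 1)%N),
      (forall e, Eneg e -> [/\ mu e \subset [set x | Epos x],
          (forall e', e' \in mu e -> s e' = s e) &
          (forall e', e' \in mu e -> forall c, dcycle s t c -> e' \in c -> t e \in map s c)]),
      (forall e e', Eneg e -> Eneg e' -> e != e' -> [disjoint mu e & mu e']) &
      (forall e, Eneg e -> po_le P 0 (pi e + \sum_(e' in mu e) pi e'))].

Definition immu : {set E} := \bigcup_(e | Eneg e) mu e.
Definition mustar (X : {set E}) : {set E} :=
  [set e | Eneg e && [exists e' in X, e' \in mu e]].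

End PGraph.

(* Main.v *)
Require Import Defs.
From HB Require Import structures.
From mathcomp Require Import all_boot all_order all_algebra zify.
Set Implicit Arguments. Unset Strict Implicit. Unset Printing Implicit Defensive.

Section Gen.
Variables (E : finType) (n : nat) (s t : E -> 'I_n).
Hypothesis nsl : forall e, s e != t e.
Implicit Types (X Y : {set E}) (u w : 'I_n).

Definition outb (X : {set E}) u := [exists e in X, s e == u].
Definition onext (X : {set E}) u := if [pick e in X | s e == u] is Some e then t e else u.
Definition rho X u := iter n (onext X) u.
Definition OD1 (X : {set E}) := forall e1 e2, e1 \in X -> e2 \in X -> s e1 = s e2 -> e1 = e2.
Definition NoDC (X : {set E}) := forall c, dcycle s t c -> all (fun e => e \in X) c -> False.

Lemma onext_root X u : ~~ outb X u -> onext X u = u.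
Proof.
rewrite /onext; case: pickP => // e /andP [eX se] /existsP []; exists e.
by rewrite eX.
Qed.

Lemma iter_root X u k : ~~ outb X u -> iter k (onext X) u = u.
Proof. by move=> h; elim: k => //= k ->; rewrite onext_root. Qed.

Lemma onext_pick X u e : [pick g in X | s g == u] = Some e ->
  [/\ e \in X, s e = u & onext X u = t e].
Proof.
move=> hp; have := hp; case: pickP => // g /andP [gX /eqP sg] [eg]; subst g.
by rewrite /onext hp; split.
Qed.

Lemma onext_out X u : outb X u -> exists e, [/\ e \in X, s e = u & onext X u = t e].
Proof.
move=> /existsP [e0 /andP [e0X se0]].
case hp: [pick g in X | s g == u] => [e|]; first by exists e; apply: onext_pick.
by move: hp; case: pickP => // /(_ e0); rewrite e0X se0.
Qed.

Lemma onext_OD1 X e : OD1 X -> e \in X -> onext X (s e) = t e.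
Proof.
move=> od eX; have [|g [gX sg ->]] := onext_out (X := X) (u := s e).
  by apply/existsP; exists e; rewrite eX eqxx.
by rewrite (od g e).
Qed.

Lemma G1core X y k : NoDC X -> iter k.+1 (onext X) y = y -> ~~ outb X y.
Proof.
move=> ndc hk; apply/negP => hy.
set f := onext X in hk.
have cyc : fcycle f (orbit f y).
  by apply/(orbitPcycle 0 3); exists k.
have allout : all (outb X) (orbit f y).
  apply/allP => z; rewrite /orbit => /trajectP [a _ ->].
  case hz: (outb X (iter a f y)) => //.
  have hr : ~~ outb X (iter a f y) by rewrite hz.
  have hm : forall c, iter (c * k.+1) f y = y.
    elim=> [|c IH] //; by rewrite mulSn iterD IH hk.
  have : iter (a * k.+1) f y = iter a f y.
    rewrite -(subnK (leq_pmulr a (ltn0Sn k))) iterD.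
    exact: iter_root.
  rewrite hm => ey; by move: hy; rewrite ey (negbTE hr).
have [e0 /andP [e0X _]] := existsP hy.
pose oute z := odflt e0 [pick g in X | s g == z].
have oP : forall z, outb X z -> [/\ oute z \in X, s (oute z) = z & t (oute z) = f z].
  move=> z /onext_out [e [eX se _]].
  rewrite /oute; case hp: [pick g in X | s g == z] => [g|] /=.
    by have [? ? ng] := onext_pick hp; rewrite /f ng.
  by move: hp; case: pickP => // /(_ e); rewrite eX se eqxx.
apply: (ndc (map oute (orbit f y))).
  rewrite /dcycle; apply/and3P; split.
  - by case: (orbit f y) (in_orbit f y).
  - rewrite cycle_map (@eq_in_cycle _ (outb X) _ (frel f) _ _ allout) //.
    move=> a b ha hb /=; have [_ _ ->] := oP a ha; have [_ -> _] := oP b hb.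
    by [].
  - rewrite -map_comp.
    have -> : map (s \o oute) (orbit f y) = map id (orbit f y).
      apply/eq_in_map => z /(allP allout) hz /=; by have [_ -> _] := oP z hz.
    by rewrite map_id orbit_uniq.
apply/allP => e /mapP [z /(allP allout) hz ->]; by have [] := oP z hz.
Qed.

Lemma noloop X : NoDC X -> forall j p, outb X (iter p (onext X) j) ->
  uniq (traject (onext X) j p.+2).
Proof.
move=> ndc j p hp; rewrite looping_uniq; apply/negP; rewrite /looping.
move=> /trajectP [a ha eq].
set f := onext X in hp eq.
have hy : iter (p - a).+1 f (iter a f j) = iter a f j.
  by rewrite -iterD -subSn // subnK // ltnW.
have := G1core ndc hy => hr.
move: hp; rewrite -(subnK (ltnSE ha)) iterD (iter_root _ hr).
by rewrite (negbTE hr).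
Qed.

Lemma term X : NoDC X -> forall u, ~~ outb X (rho X u).
Proof.
move=> ndc u; apply/negP => h.
have := noloop ndc h; move/card_uniqP; rewrite size_traject => hc.
have := max_card (mem (traject (onext X) u n.+2)).
rewrite hc card_ord; lia.
Qed.

Lemma mem_zip2 (A B : eqType) (l : seq A) (p : seq B) c d :
  (c, d) \in zip l p -> d \in p.
Proof.
elim: l p => [|x l IH] [|y p] //=; rewrite !in_cons.
by case/orP => [/eqP [_ ->]|/IH ->]; rewrite ?eqxx ?orbT.
Qed.

Lemma path_zipb (T : Type) (r : rel T) y p :
  path r y p -> all (fun uv => r uv.1 uv.2) (zip (belast y p) p).
Proof. by elim: p y => //= z p IH y /andP [ryz pp]; rewrite ryz /=; apply: IH. Qed.

Lemma zip_mapl (A B : Type) (f : A -> B) l : zip (map f l) l = map (fun a => (f a, a)) l.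
Proof. by elim: l => //= a l ->. Qed.

Lemma norev (T : eqType) (y : T) p a b : uniq (y :: p) ->
  (a, b) \in zip (belast y p) p -> (b, a) \in zip (belast y p) p -> False.
Proof.
elim: p y => //= z p IH y /andP [yn uq]; rewrite !in_cons.
move: yn; rewrite in_cons negb_or => /andP [yz yp].
case/orP => [/eqP [ay bz]|h1]; case/orP => [/eqP [by' az]|h2].
- by move: yz; rewrite -ay -az eqxx.
- by move: yp; rewrite -ay (mem_zip2 h2).
- by move: yp; rewrite -by' (mem_zip2 h1).
- exact: IH uq h1 h2.
Qed.

Lemma uadj_sym X : symmetric (uadj s t X).
Proof.
move=> u v; rewrite /uadj; apply/existsP/existsP => [] [e /andP [eX j]];
by exists e; rewrite eX /joins orbC.
Qed.

Lemma mk_ucycle X e x y : e \in X -> joins s t e x y -> x != y ->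
  connect (uadj s t (X :\ e)) y x ->
  exists es vs, all (fun g => g \in X) es /\ Defs.ucycle s t es vs.
Proof.
move=> eX jxy xy /connectP [p0 pth0 xe0].
case/shortenP: pth0 xe0 => p pth uq _ xe.
set pr := zip (belast y p) p.
pose pe (uv : 'I_n * 'I_n) := odflt e [pick g in X :\ e | joins s t g uv.1 uv.2].
have peP : forall uv, uv \in pr -> pe uv \in X :\ e /\ joins s t (pe uv) uv.1 uv.2.
  move=> uv /(allP (path_zipb pth)) /existsP [g0 /andP [g0X j0]].
  rewrite /pe; case: pickP => [g /andP [gX jg]|] /=; first by [].
  by move/(_ g0); rewrite g0X j0.
have szp : size (belast y p) = size p by rewrite size_belast.
exists (rcons (map pe pr) e), (y :: p); split.
  apply/allP => g; rewrite mem_rcons in_cons => /orP [/eqP -> //|].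
  by move=> /mapP [uv /peP [] /setD1P [] _ gX _ ->].
apply/and5P; split.
- by rewrite size_rcons.
- by rewrite size_rcons size_map size_zip szp minnn.
- rewrite rcons_uniq; apply/andP; split.
    by apply/mapP => -[uv /peP [] /setD1P [] /eqP ne _ _ ee]; apply: ne.
  rewrite map_inj_in_uniq.
    have : uniq (unzip1 pr) by rewrite /pr unzip1_zip ?szp //; move: uq; rewrite lastI rcons_uniq => /andP [].
    exact: map_uniq.
  move=> [a b] [c d] h1 h2 eqp.
  have [_ j1] := peP _ h1; have [_ j2] := peP _ h2.
  move: j1 j2; rewrite eqp /joins /=.
  case/orP => /andP [/eqP sa /eqP tb]; case/orP => /andP [/eqP sc /eqP td];
  try by rewrite -sa -tb sc td.
  1,2: by exfalso; apply: (norev uq h1); have [-> ->] : b = c /\ a = d by split; congruence.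
- exact: uq.
- rewrite rot1_cons.
  have -> : y :: p = rcons (belast y p) (last y p) by rewrite -lastI.
  rewrite zip_rcons // -xe zip_rcons; last by rewrite size_map.
  rewrite all_rcons jxy /= zip_mapl all_map.
  by apply/allP => uv /peP [].
Qed.

Lemma walkc Y (q : seq E) a z :
  path (fun e f => t e == s f) a (rcons q z) -> all (fun g => g \in Y) q ->
  connect (uadj s t Y) (t a) (s z).
Proof.
elim: q a => [|e q IH] a /=; first by rewrite andbT => /eqP ->.
case/andP => /eqP -> pq /andP [eY aq].
apply: connect_trans (IH e pq aq); apply: connect1.
by apply/existsP; exists e; rewrite eY /joins !eqxx.
Qed.

Lemma acyc_NoDC X : acyclic s t X -> NoDC X.
Proof.
move=> ac [|e0 c] // /and3P [_ cy uq] /= /andP [e0X cX].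
have uqc : uniq (e0 :: c) := map_uniq uq.
move: uqc => /= /andP [e0c _].
have hc : connect (uadj s t (X :\ e0)) (t e0) (s e0).
  apply: walkc cy _; apply/allP => g gc; rewrite !inE (allP cX g gc) andbT.
  by apply/eqP => ge; move: e0c; rewrite -ge gc.
have jj : joins s t e0 (s e0) (t e0) by rewrite /joins !eqxx.
have [es [vs [esX uc]]] := mk_ucycle e0X jj (nsl e0) hc.
by move: (ac es vs esX); rewrite uc.
Qed.

Lemma walk_conn X Y u j :
  (forall w e, [pick g in X | s g == w] = Some e -> e \in Y) ->
  connect (uadj s t Y) u (iter j (onext X) u).
Proof.
move=> hY; elim: j => [|j IH] /=; first exact: connect0.
apply: connect_trans IH _.
case hp: [pick g in X | s g == iter j (onext X) u] => [e|].
  have [eX se ->] := onext_pick hp; apply: connect1; apply/existsP; exists e.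
  by rewrite (hY _ _ hp) /joins se !eqxx.
by rewrite /onext hp; apply: connect0.
Qed.

Lemma walk_connX X u j : connect (uadj s t X) u (iter j (onext X) u).
Proof. by apply: walk_conn => w e /onext_pick []. Qed.

Lemma comp_eq X u w : w \in Defs.comp s t X u -> Defs.comp s t X w = Defs.comp s t X u.
Proof.
rewrite inE => cuw; apply/setP => z; rewrite !inE.
have cs := sym_connect_sym (uadj_sym X).
apply/idP/idP => h; first exact: connect_trans cuw h.
by apply: connect_trans h; rewrite cs.
Qed.

Lemma rho_edge X e : OD1 X -> (forall u, ~~ outb X (rho X u)) -> e \in X ->
  rho X (s e) = rho X (t e).
Proof.
move=> od tm eX; rewrite /rho -(onext_OD1 od eX) -iterSr iterS onext_root //.
exact: tm.
Qed.

Lemma rho_root X u : ~~ outb X u -> rho X u = u.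
Proof. exact: iter_root. Qed.

Lemma comp_rho X u : OD1 X -> (forall u, ~~ outb X (rho X u)) ->
  Defs.comp s t X u = [set w | rho X w == rho X u].
Proof.
move=> od tm; apply/setP => w; rewrite !inE; apply/idP/idP.
  move=> /connectP [p pth ->]; elim: p u pth => [|v p IH] u //= /andP [uv pth].
  rewrite (eqP (IH v pth)).
  case/existsP: uv => e /andP [eX /orP [] /andP [/eqP se /eqP te]];
  by rewrite -se -te (rho_edge od tm eX).
move=> /eqP h.
have cs := sym_connect_sym (uadj_sym X).
apply: connect_trans (walk_connX X u n) _.
rewrite cs; rewrite -/(rho X u) -h; exact: walk_connX.
Qed.

Lemma exmax (T : eqType) (h : T -> nat) (x0 : T) (l : seq T) :
  exists2 x, x \in x0 :: l & forall y, y \in x0 :: l -> h y <= h x.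
Proof.
elim: l x0 => [|a l IH] x0.
  by exists x0 => [|y]; rewrite ?mem_seq1 // => /eqP ->.
have [x xin hx] := IH a.
case: (leqP (h x0) (h x)) => hc.
  exists x; first by rewrite in_cons xin orbT.
  by move=> y; rewrite in_cons => /orP [/eqP -> //|]; apply: hx.
exists x0; first exact: mem_head.
move=> y; rewrite in_cons => /orP [/eqP -> //|/hx hy].
exact: leq_trans hy (ltnW hc).
Qed.

Lemma sum_step (G : nat -> nat) N : G 0 = 1 -> G N.+1 = 0 ->
  \sum_(0 <= j < N.+1) G j = (\sum_(0 <= j < N.+1) G j.+1).+1.
Proof.
move=> g0 gN; rewrite big_nat_recl // big_nat_recr //= gN addn0 g0 add1n.
by [].
Qed.

Lemma OD_acyclic X : OD1 X -> (forall u, ~~ outb X (rho X u)) -> acyclic s t X.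
Proof.
move=> od tm es vs esX; apply/negP => /and5P [kp /eqP szv uqe uqv alj].
set f := onext X.
pose h u := \sum_(0 <= j < n) (outb X (iter j f u) : nat).
have hstep : forall e, e \in X -> h (s e) = (h (t e)).+1.
  move=> e eX.
  have n0 : 0 < n by apply: leq_ltn_trans (leq0n _) (ltn_ord (s e)).
  have eN : n = n.-1.+1 by rewrite prednK.
  have fse : f (s e) = t e by apply: onext_OD1.
  have G0 : (outb X (iter 0 f (s e)) : nat) = 1.
    by apply/eqP; rewrite eqb1; apply/existsP; exists e; rewrite eX eqxx.
  have GN : (outb X (iter n.-1.+1 f (s e)) : nat) = 0.
    by apply/eqP; rewrite eqb0 -eN; exact: tm.
  have := @sum_step (fun j => outb X (iter j f (s e)) : nat) n.-1 G0 GN.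
  rewrite -eN /h => ->; congr (_.+1).
  by apply: eq_bigr => j _; rewrite iterSr fse.
case: es kp szv uqe alj esX => [|e0 es'] // _.
case: vs uqv => [|v0 vs'] // uqv szv uqe alj esX.
set vs := v0 :: vs' in uqv szv alj *; set es := e0 :: es' in uqe alj esX *.
have [x xin hx] := exmax h v0 vs'.
set i0 := index x vs.
have i0k : i0 < size vs by rewrite index_mem.
have szr : size (rot 1 vs) = size vs by rewrite size_rot.
have jn : forall j, j < size vs -> joins s t (nth e0 es j) (nth v0 vs j) (nth v0 (rot 1 vs) j).
  move=> j jk; have /(all_nthP (e0, (v0, v0))) H := alj.
  have := H j; rewrite size_zip size_zip szr minnn -szv minnn => /(_ jk).
  by rewrite nth_zip ?size_zip ?szr ?minnn ?szv //= nth_zip ?szr.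
have rotn : forall j, j < size vs -> nth v0 (rot 1 vs) j \in vs.
  by move=> j jk; rewrite -(mem_rot 1) mem_nth ?szr.
set i1 := if i0 == 0 then (size vs).-1 else i0.-1.
have i1k : i1 < size vs.
  rewrite /i1; case: eqP => _; first by rewrite /vs.
  by apply: leq_ltn_trans (leq_pred _) i0k.
have xe : nth v0 vs i0 = x := nth_index v0 xin.
have ri1 : nth v0 (rot 1 vs) i1 = x.
  rewrite /vs rot1_cons nth_rcons /i1; case: eqP => [e0i|ne0].
    by rewrite /= ltnn eqxx -xe e0i.
  have ip : i0 = i0.-1.+1 by rewrite prednK // lt0n; apply/eqP.
  have : i0.-1 < size vs' by rewrite -ltnS -ip.
  by move=> ->; rewrite -xe {2}ip.
have noup : forall e, e \in X -> t e = x -> s e \in vs -> False.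
  move=> e eX te se; have := hx _ se; rewrite hstep // te ltnn.
  by [].
have szes : size es = size vs by rewrite szv.
have eaX : nth e0 es i0 \in X by apply: (allP esX); rewrite mem_nth // szes.
have ebX : nth e0 es i1 \in X by apply: (allP esX); rewrite mem_nth // szes.
have ja := jn i0 i0k; rewrite xe in ja.
have jb := jn i1 i1k; rewrite ri1 in jb.
move: ja jb; rewrite /joins.
case/orP => /andP [/eqP sa /eqP ta]; last first.
  by exfalso; apply: (noup _ eaX ta); rewrite sa rotn.
case/orP => /andP [/eqP sb /eqP tb].
  by exfalso; apply: (noup _ ebX tb); rewrite sb mem_nth.
have := od _ _ eaX ebX; rewrite sa sb => /(_ erefl) /eqP.
rewrite nth_uniq ?szes // => /eqP i01.
by move: (nsl (nth e0 es i0)); rewrite sa ta i01 ri1 eqxx.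
Qed.

Lemma T_term F B X : Theta s t F B X -> forall u, ~~ outb X (rho X u).
Proof. by case=> ac _ _; apply: term; apply: acyc_NoDC. Qed.

Lemma T_root F B X u w : Theta s t F B X -> w \in Defs.comp s t X u ->
  ~~ outb X w -> w \in B /\ forall w', w' \in Defs.comp s t X u -> ~~ outb X w' -> w' = w.
Proof.
case=> _ _ /(_ u) [_ [r [rB rc hr]]] wc wo.
have wr : w = r by apply/eqP; rewrite -hr.
split; first by rewrite wr.
by move=> w' w'c w'o; rewrite wr; apply/eqP; rewrite -hr.
Qed.

Lemma T_OD1 F B X : Theta s t F B X -> OD1 X.
Proof.
move=> th e1 e2 e1X e2X se; apply/eqP; apply/negPn/negP => ne.
have tm := T_term th.
have [ac _ _] := th.
set v := s e1.
case hp: [pick g in X | s g == v] => [g|]; last first.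
  by move: hp; case: pickP => // /(_ e1); rewrite e1X eqxx.
have [gX sg _] := onext_pick hp.
have [e [eX sev eg]] : exists e, [/\ e \in X, s e = v & e != g].
  case: (g =P e1) => [ge1|ne1]; last by exists e1; split => //; apply/eqP => /esym.
  by exists e2; split => //; rewrite ge1 eq_sym.
pose Y := X :\ e.
have hY : forall w g', [pick g0 in X | s g0 == w] = Some g' -> g' \in Y.
  move=> w g' hp'; have [g'X sg' _] := onext_pick hp'.
  rewrite !inE g'X andbT; apply/eqP => g'e.
  move: hp'; rewrite g'e sev in sg' *; rewrite -sg' hp => -[ge].
  by move: eg; rewrite ge eqxx.
have cv := walk_conn v n hY.
have cb := walk_conn (t e) n hY.
have cs := sym_connect_sym (uadj_sym X).
have vc : v \in Defs.comp s t X v by rewrite inE connect0.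
have rv : rho X v \in Defs.comp s t X v by rewrite inE; apply: walk_connX.
have rb : rho X (t e) \in Defs.comp s t X v.
  rewrite inE; apply: connect_trans (walk_connX X (t e) n).
  by apply: connect1; apply/existsP; exists e; rewrite eX /joins sev !eqxx.
have [_ uq] := T_root th rv (tm v).
have eqr := uq _ rb (tm (t e)).
have hc : connect (uadj s t Y) (t e) v.
  apply: connect_trans cb _; rewrite -/(rho X (t e)) eqr.
  by rewrite (sym_connect_sym (uadj_sym Y)).
have jj : joins s t e v (t e) by rewrite /joins sev !eqxx.
have vte : v != t e by rewrite -sev nsl.
have [es [vs [esX uc]]] := mk_ucycle eX jj vte hc.
by move: (ac es vs esX); rewrite uc.
Qed.

Lemma T_noout F B X : Theta s t F B X -> forall u, (~~ outb X u) = (u \in B).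
Proof.
move=> th.
have tm := T_term th; have od := T_OD1 th.
have [_ card _] := th.
have uc : forall u, u \in Defs.comp s t X u by move=> u; rewrite inE connect0.
have sub : [set u | ~~ outb X u] \subset B.
  by apply/subsetP => u; rewrite inE => uo; have [] := T_root th (uc u) uo.
have e1 : [set Defs.comp s t X u | u : 'I_n] = [set Defs.comp s t X u | u in [set u | ~~ outb X u]].
  apply/setP => C; apply/imsetP/imsetP => [[u _ ->]|[u _ ->]]; last by exists u.
  exists (rho X u); first by rewrite inE tm.
  by rewrite (@comp_eq X u (rho X u)) // inE; apply: walk_connX.
have inj : {in [set u | ~~ outb X u] &, injective (Defs.comp s t X)}.
  move=> a b; rewrite !inE => ao bo eab.
  have : a \in Defs.comp s t X b by rewrite -eab uc.
  by rewrite comp_rho // inE !rho_root // => /eqP.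
have := card; rewrite e1 card_in_imset // => ceq.
have /eqP eqB : [set u | ~~ outb X u] == B.
  by rewrite -(subset_leqif_cards sub) ceq.
by move=> u; rewrite -eqB inE.
Qed.

Lemma T_injF F B X : Theta s t F B X -> #|F| <= #|B| ->
  forall f g, f \in F -> g \in F -> f \in Defs.comp s t X g -> f = g.
Proof.
move=> th cFB f g fF gF fc.
have [_ card hF] := th.
have e1 : [set Defs.comp s t X u | u : 'I_n] = [set Defs.comp s t X u | u in F].
  apply/setP => C; apply/imsetP/imsetP => [[u _ ->]|[u _ ->]]; last by exists u.
  have [[w [wc wF]] _] := hF u.
  by exists w => //; rewrite (@comp_eq X u w).
have : #|[set Defs.comp s t X u | u in F]| == #|F|.
  rewrite eqn_leq leq_imset_card /= -e1 card.
  by [].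
move/imset_injP => inj; apply: inj => //.
by rewrite (@comp_eq X g f).
Qed.

Lemma theta_from (F B : {set 'I_n}) X : OD1 X -> (forall u, ~~ outb X (rho X u)) ->
  (forall u, (~~ outb X u) = (u \in B)) ->
  (forall u, exists w, w \in Defs.comp s t X u /\ w \in F) -> Theta s t F B X.
Proof.
move=> od tm nb hF; split.
- exact: OD_acyclic.
- have e1 : [set Defs.comp s t X u | u : 'I_n] = [set Defs.comp s t X u | u in B].
    apply/setP => C; apply/imsetP/imsetP => [[u _ ->]|[u _ ->]]; last by exists u.
    exists (rho X u); first by rewrite -nb tm.
    by rewrite (@comp_eq X u (rho X u)) // inE; apply: walk_connX.
  rewrite e1 card_in_imset //.
  move=> a b; rewrite -!nb => ao bo eab.
  have : a \in Defs.comp s t X b by rewrite -eab inE connect0.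
  by rewrite comp_rho // inE !rho_root // => /eqP.
- move=> u; split; first exact: hF.
  exists (rho X u); split.
  + by rewrite -nb tm.
  + by rewrite inE; apply: walk_connX.
  + move=> w; rewrite comp_rho // inE => /eqP wr.
    rewrite -/(outb X w); case: (boolP (outb X w)) => hw /=.
      by apply/esym/negbTE; apply: contraNneq (tm u) => <-.
    by rewrite -wr rho_root // eqxx.
Qed.

End Gen.

Section PG.
Variables (R : comNzRingType) (P : po_ring R) (E : finType) (n : nat).
Variables (s t : E -> 'I_n) (pi : E -> R) (mu : E -> {set E}).
Hypothesis pg : is_Pgraph P s t pi mu.
Variable zeta : {set E}.
Hypothesis od0 : OD1 s zeta.
Implicit Types (Ei : {set E}) (u : 'I_n) (e : E).

Definition Mod (Ei : {set E}) := (zeta :\: Ei) :|: mustar P pi mu Ei.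

Lemma ms_src Ei e : e \in mustar P pi mu Ei ->
  exists e', [/\ e' \in Ei, e' \in mu e, s e' = s e & Eneg P pi e].
Proof.
rewrite inE => /andP [ne /existsP [e' /andP [e'E e'm]]].
have [_ _ hn _ _] := pg; have [_ hs _] := hn e ne.
by exists e'; split => //; apply: hs.
Qed.

Lemma outM Ei u : Ei \subset zeta :&: immu P pi mu -> outb s (Mod Ei) u = outb s zeta u.
Proof.
move=> sub; apply/existsP/existsP => [[e /andP [eM /eqP se]]|[e /andP [ez /eqP se]]].
  move: eM; rewrite inE => /orP [|/ms_src [e' [e'E _ se' _]]].
    by rewrite inE => /andP [_ ez]; exists e; rewrite ez se eqxx.
  have := subsetP sub _ e'E; rewrite inE => /andP [e'z _].
  by exists e'; rewrite e'z se' se eqxx.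
case eE: (e \in Ei).
  have := subsetP sub _ eE; rewrite inE => /andP [_ /bigcupP [x xn emx]].
  have [_ _ hn _ _] := pg; have [_ hs _] := hn x xn.
  exists x; rewrite !inE xn /= -(hs e emx) se eqxx andbT orbC /=.
  by apply/orP; left; apply/existsP; exists e; rewrite eE emx.
by exists e; rewrite /Mod !inE eE ez se eqxx.
Qed.

Lemma odM Ei : Ei \subset zeta :&: immu P pi mu -> OD1 s (Mod Ei).
Proof.
move=> sub.
have inz : forall e, e \in Ei -> e \in zeta.
  by move=> e /(subsetP sub); rewrite inE => /andP [].
have [_ _ hn hd _] := pg.
move=> e1 e2; rewrite /Mod !in_setU !in_setD => h1 h2 se.
case/orP: h1 => [/andP [n1 z1]|m1]; case/orP: h2 => [/andP [n2 z2]|m2].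
- exact: od0.
- have [e' [e'E _ se' _]] := ms_src m2.
  have ee := od0 z1 (inz _ e'E) (etrans se (esym se')).
  by move: n1; rewrite ee e'E.
- have [e' [e'E _ se' _]] := ms_src m1.
  have ee := od0 z2 (inz _ e'E) (etrans (esym se) (esym se')).
  by move: n2; rewrite ee e'E.
- have [e1' [e1E e1m se1 ne1]] := ms_src m1.
  have [e2' [e2E e2m se2 ne2]] := ms_src m2.
  have ee := od0 (inz _ e1E) (inz _ e2E) (etrans se1 (etrans se (esym se2))).
  apply/eqP; apply/negPn/negP => ne.
  have := hd _ _ ne1 ne2 ne => /disjointFr /(_ e1m).
  by rewrite ee e2m.
Qed.

Lemma key_ms x Ea Eb : x \in Mod (Ea :|: Eb) -> x \notin Mod Ea -> x \in mustar P pi mu Eb.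
Proof.
rewrite /Mod !in_setU !in_setD negb_or => /orP [/andP [nab xz]|xm] /andP [h1 h2].
  by exfalso; move: h1 nab; rewrite in_setU xz andbT negbK => ->.
move: xm h2; rewrite !inE => /andP [-> /existsP [e' /andP [e'E e'm]]] /=.
move=> h2; apply/existsP; exists e'; rewrite e'm andbT.
move: e'E; rewrite in_setU => /orP [e'a|//].
by move: h2; case/existsP; exists e'; rewrite e'a.
Qed.

Lemma ndcM E1 E2 : NoDC s t (Mod E1) -> NoDC s t (Mod E2) -> NoDC s t (Mod (E1 :|: E2)).
Proof.
move=> n1 n2 c dc cZ.
have [_ hc _ _ _] := pg.
case/and3P: (dc) => _ _ /map_uniq uqc.
case: (boolP (all (fun e => e \in Mod E1) c)) => [h|/allPn [x1 x1c x1n]]; first exact: n1 c dc h.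
case: (boolP (all (fun e => e \in Mod E2) c)) => [h|/allPn [x2 x2c x2n]]; first exact: n2 c dc h.
have m1 := key_ms (allP cZ _ x1c) x1n.
have m2 : x2 \in mustar P pi mu E1 by apply: key_ms x2n; rewrite setUC; apply: (allP cZ).
have x12 : x1 != x2.
  by apply/eqP => e12; move: x2n; rewrite -e12 /Mod in_setU m1 orbT.
have ng1 : Eneg P pi x1 by move: m1; rewrite inE => /andP [].
have ng2 : Eneg P pi x2 by move: m2; rewrite inE => /andP [].
have := hc c dc; rewrite -size_filter => h1.
have : size [:: x1; x2] <= size (filter (Eneg P pi) c).
  apply: uniq_leq_size; first by rewrite /= inE x12.
  by move=> y; rewrite !inE => /orP [] /eqP ->; rewrite mem_filter ?ng1 ?ng2.
by move=> h2; have := leq_trans h2 h1.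
Qed.
End PG.

Section Blocks.
Variables (d : nat) (mb : nat -> nat).
Local Notation bs := (bstart mb).

Lemma bstartS i : bs i.+1 = bs i + (if i is 0 then 0 else mb i).
Proof.
case: i => [|i]; first by rewrite /bstart !big_geq.
by rewrite /bstart big_nat_recr.
Qed.

Lemma bstart_mono i j : i <= j -> bs i <= bs j.
Proof.
move=> /subnK <-; elim: (j - i) => [|k IH] //=.
by rewrite addSn bstartS; apply: leq_trans IH (leq_addr _ _).
Qed.

Lemma msumE : msum d mb = mb 0 + bs d.+1.
Proof.
rewrite /msum big_ord_recl /bstart big_add1 /= big_mkord; congr (_ + _).
Qed.

Lemma inblk_i i v : 1 <= i <= d -> inblk d mb i v = (bs i <= v < bs i.+1).
Proof.
case/andP => i1 id; rewrite /inblk id; case: i i1 id => [|i] //= _ _.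
by rewrite [bs i.+2]bstartS.
Qed.

Lemma inblk_top v : inblk d mb d.+1 v = (v == msum d mb).
Proof. by rewrite /inblk /= ltnn eqxx. Qed.

Lemma inblk0 v : inblk d mb 0 v = (bs d.+1 <= v <= msum d mb).
Proof. by rewrite /inblk /= {1}msumE addKn. Qed.

Lemma blk_lt i v : 1 <= i <= d -> inblk d mb i v -> v < bs d.+1.
Proof.
move=> hi; rewrite inblk_i // => /andP [_ h]; apply: leq_trans h _.
by apply: bstart_mono; case/andP: hi.
Qed.

Lemma blk_disj i j v : 1 <= i <= d.+1 -> 1 <= j <= d.+1 ->
  inblk d mb i v -> inblk d mb j v -> i = j.
Proof.
have top : forall i, 1 <= i <= d -> inblk d mb i v -> ~~ inblk d mb d.+1 v.
  move=> i0 hi0 h0; rewrite inblk_top; apply/negP => /eqP ev.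
  by move: (blk_lt hi0 h0); rewrite ev msumE ltnNge leq_addl.
case/andP => i1; rewrite leq_eqVlt ltnS => /orP [/eqP ->|id];
case/andP => j1; rewrite leq_eqVlt ltnS => /orP [/eqP ->|jd] //.
- by move=> h1 h2; move: (top j (introT andP (conj j1 jd)) h2); rewrite h1.
- by move=> h1 h2; move: (top i (introT andP (conj i1 id)) h1); rewrite h2.
rewrite !inblk_i ?i1 ?j1 // => /andP [a1 a2] /andP [b1 b2].
apply/eqP; rewrite eqn_leq; apply/andP; split; rewrite leqNgt; apply/negP => lt.
  have := bstart_mono lt; move=> h; have := leq_ltn_trans (leq_trans h a1) b2.
  by rewrite ltnn.
have := bstart_mono lt; move=> h; have := leq_ltn_trans (leq_trans h b1) a2.
by rewrite ltnn.
Qed.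

Lemma blk0_not j v : 1 <= j <= d -> inblk d mb 0 v -> ~~ inblk d mb j v.
Proof.
move=> hj; rewrite inblk0 => /andP [h _]; apply/negP => /(blk_lt hj).
by rewrite ltnNge h.
Qed.

Lemma cover v : v <= msum d mb -> inblk d mb 0 v \/ exists2 j, 1 <= j <= d & inblk d mb j v.
Proof.
move=> hv; case: (leqP (bs d.+1) v) => h; first by left; rewrite inblk0 h hv.
right; have ex : exists j, v < bs j.+1 by exists d.
case: (ex_minnP ex) => j0 hj0 hmin.
have j0d : j0 <= d := hmin d h.
case: j0 hj0 hmin j0d => [|j1] hj0 hmin j0d.
  by move: hj0; rewrite bstartS /bstart big_geq.
exists j1.+1; first by rewrite j0d.
rewrite inblk_i ?j0d // hj0 andbT leqNgt; apply/negP => lt.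
by have := hmin j1 lt; rewrite ltnn.
Qed.

End Blocks.

Lemma map_traject (T : Type) (f : T -> T) x k : map f (traject f x k) = traject f (f x) k.
Proof. by elim: k x => //= k IH x; rewrite IH. Qed.

Lemma belast_traject (T : Type) (f : T -> T) x k : belast x (traject f (f x) k) = traject f x k.
Proof. by elim: k x => //= k IH x; rewrite IH. Qed.

Lemma jn_part (E : finType) (n : nat) (s t : E -> 'I_n) (Z zeta Z0 : {set E}) (bad : pred E)
  (F B : {set 'I_n}) (j om : 'I_n) :
  NoDC s t Z -> OD1 s zeta ->
  (forall u, outb s Z u = outb s zeta u) ->
  (forall e, e \in Z -> ~~ bad e -> e \in Z0) -> Z0 \subset zeta ->
  (forall g, g \in Z -> bad g ->
     exists Y, [/\ Theta s t F B Y, g \in Y & Z0 \subset Y]) ->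
  (forall (l' : 'I_n) (q : seq E), dpath s t j l' q -> has bad q -> om \in j :: map t q) ->
  j \in F -> om \in F -> j != om -> #|F| <= #|B| ->
  forall p, iter p (onext s t Z) j = iter p (onext s t zeta) j.
Proof.
move=> ndc od0 outZ hZ0 Z0z hY hstar jF omF jom cFB.
set f := onext s t Z.
pose x p := iter p f j.
pose badp p := if [pick g in Z | s g == x p] is Some g then bad g else false.
have step : forall p, ~~ badp p -> f (x p) = onext s t zeta (x p).
  move=> p; rewrite /badp; case hp: [pick g in Z | s g == x p] => [g|] nb.
    have [gZ sg fg] := onext_pick t hp.
    by rewrite /f fg -sg (onext_OD1 t od0) // (subsetP Z0z) // hZ0.
  have nZ : ~~ outb s Z (x p).
    apply/existsP => -[e he]; move: hp; case: pickP => // /(_ e).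
    by rewrite he.
  rewrite /f (onext_root t nZ) onext_root //; by rewrite -outZ.
have nobad : forall p, ~~ badp p.
  suff: ~ exists p, badp p.
    by move=> h p; apply/negP => bp; apply: h; exists p.
  move=> ex; case: (ex_minnP ex) => p0 bp0 hmin.
  have prev : forall r, r < p0 -> ~~ badp r.
    by move=> r hr; apply/negP => br; have := hmin r br; rewrite leqNgt hr.
  move: bp0; rewrite /badp; case hp: [pick g in Z | s g == x p0] => [g|] // gb.
  have [gZ sg fg] := onext_pick t hp.
  have hxo : forall r, r <= p0 -> outb s Z (x r).
    move=> r hr; case nr0 : (outb s Z (x r)) => //.
    have nr : ~~ outb s Z (x r) by rewrite nr0.
    have : x p0 = x r by rewrite /x -(subnK hr) iterD (iter_root t _ nr).
    move=> e; move: nr; rewrite -e; case/negP; apply/existsP; exists g.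
    by rewrite gZ sg eqxx.
  pose oute y := odflt g [pick g' in Z | s g' == y].
  have oP : forall r, r <= p0 ->
      [/\ oute (x r) \in Z, s (oute (x r)) = x r, t (oute (x r)) = x r.+1
        & (r < p0 -> ~~ bad (oute (x r)))].
    move=> r hr; rewrite /oute.
    case hp': [pick g' in Z | s g' == x r] => [g'|] /=.
      have [g'Z sg' fg'] := onext_pick t hp'.
      split => //; last by move=> lt; have := prev r lt; rewrite /badp hp'.
    have := hxo r hr; case/existsP => e he; move: hp'; case: pickP => // /(_ e).
    by rewrite he.
  have og : oute (x p0) = g by rewrite /oute hp.
  have [Y [thY gY Z0Y]] := hY g gZ gb.
  have inY : forall r, r <= p0 -> oute (x r) \in Y.
    move=> r hr; case: (ltnP r p0) => lt.
      have [o1 _ _ o4] := oP r hr; exact: (subsetP Z0Y) (hZ0 _ o1 (o4 lt)).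
    have -> : r = p0 by apply/eqP; rewrite eqn_leq hr lt.
    by rewrite og.
  have trj : forall y, y \in traject f j p0.+1 -> exists2 r, r <= p0 & y = x r.
    by move=> y /trajectP [r hr ->]; exists r.
  set q := map oute (traject f j p0.+1).
  have ms : map s q = traject f j p0.+1.
    rewrite -map_comp -[RHS]map_id; apply/eq_in_map => y /trj [r hr ->] /=.
    by have [] := oP r hr.
  have mt : map t q = traject f (f j) p0.+1.
    rewrite -map_comp -map_traject; apply/eq_in_map => y /trj [r hr ->] /=.
    by have [_ _ -> _] := oP r hr; rewrite /x iterS.
  have dp : dpath s t j (x p0.+1) q.
    apply/and3P; split.
    - by rewrite ms mt belast_traject.
    - by rewrite mt last_traject.
    - by rewrite mt -trajectS; apply: noloop ndc _ _ (hxo p0 (leqnn _)).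
  have hq : has bad q.
    apply/hasP; exists g => //; rewrite -og; apply: map_f.
    by apply/trajectP; exists p0.
  have := hstar _ _ dp hq; rewrite mt -trajectS => /trajectP [r hr omr].
  have cY : forall r, r <= p0.+1 -> connect (uadj s t Y) j (x r).
    elim=> [|r' IH] hr'; first exact: connect0.
    apply: connect_trans (IH (ltnW hr')) _; apply: connect1.
    have [_ so to _] := oP r' hr'.
    apply/existsP; exists (oute (x r')); rewrite inY // /joins so to !eqxx.
    by [].
  have omc : om \in Defs.comp s t Y j by rewrite inE omr; apply: cY.
  by move: jom; rewrite (T_injF thY cFB omF jF omc) eqxx.
elim=> [|p IH] //.
by rewrite iterS -/(x p) step ?nobad // /x IH -iterS.
Qed.
Local Open Scope ring_scope.
Lemma core5p3
  (R : comNzRingType) (P : po_ring R)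
  (d : nat) (mb : nat -> nat)
  (A : 'M[R]_(msum d mb)) (b : 'cV[R]_(msum d mb))
  (jn : nat -> 'I_(msum d mb).+1)
  (E : finType) (s t : E -> 'I_(msum d mb).+1) (pi : E -> R) (mu : E -> {set E})
  (k : nat) (Bt : {set 'I_(msum d mb).+1}) (l : 'I_(msum d mb).+1)
  (zeta E1 E2 : {set E}) :
  (forall i, (1 <= i <= d)%N -> forall r c : 'I_(msum d mb),
      inblk d mb i r -> ~~ inblk d mb i c -> A r c = 0) ->
  (forall i, (1 <= i <= d)%N -> forall r1 r2 : 'I_(msum d mb),
      inblk d mb i r1 -> inblk d mb i r2 -> b r1 0 != 0 -> b r2 0 != 0 -> r1 = r2) ->
  (forall i, (1 <= i <= d)%N -> inblk d mb i (jn i)) ->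
  (forall r : 'I_(msum d mb), (r < msum d mb - mb 0%N)%N ->
      (forall i, (1 <= i <= d)%N -> val r != val (jn i)) -> b r 0 = 0) ->
  (forall e, s e != t e) ->
  (forall e (i j : nat), (i <= d)%N -> (1 <= j <= d)%N -> i != j ->
      inblk d mb i (s e) -> ~~ inblk d mb j (t e)) ->
  (forall r : 'I_(msum d mb), widen_ord (leqnSn _) r \notin Fset d jn ->
      (forall c : 'I_(msum d mb),
         laplacian s t pi (widen_ord (leqnSn _) r) (widen_ord (leqnSn _) c) = A r c) /\
      laplacian s t pi (widen_ord (leqnSn _) r) ord_max = b r 0) ->
  is_Pgraph P s t pi mu ->
  (forall (l' : 'I_(msum d mb).+1), (l' < msum d mb)%N ->
      forall i, (1 <= i <= d)%N -> forall p, dpath s t (jn i) l' p ->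
      has (Eneg P pi) p -> ord_max \in jn i :: map t p) ->
  (1 <= k <= d.+1)%N ->
  (exists w : nat -> 'I_(msum d mb).+1,
      (forall j, (1 <= j <= d.+1)%N -> j != k -> inblk d mb j (w j)) /\
      Bt = [set w (val j) | j : 'I_d.+2 & (0 < val j)%N && (val j != k)]) ->
  l \notin Bt ->
  Theta s t (Fset d jn) (l |: Bt) zeta ->
  (E1 \subset zeta :&: immu P pi mu /\
     Theta s t (Fset d jn) (l |: Bt) ((zeta :\: E1) :|: mustar P pi mu E1)) ->
  (E2 \subset zeta :&: immu P pi mu /\
     Theta s t (Fset d jn) (l |: Bt) ((zeta :\: E2) :|: mustar P pi mu E2)) ->
  (E1 :|: E2 \subset zeta :&: immu P pi mu /\
     Theta s t (Fset d jn) (l |: Bt) ((zeta :\: (E1 :|: E2)) :|: mustar P pi mu (E1 :|: E2))).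
Proof.
Local Close Scope ring_scope.
move=> hA hb hj hb0 nsl compat hL pg star hk [w [hw hBt]] lBt th0 [sub1 th1] [sub2 th2].
set F := Fset d jn in th0 th1 th2 *.
set B := l |: Bt in th0 th1 th2 *.
have sub : E1 :|: E2 \subset zeta :&: immu P pi mu by rewrite subUset sub1 sub2.
split => //.
pose om : 'I_(msum d mb).+1 := ord_max.
pose Z := Mod P pi mu zeta (E1 :|: E2).
change (Theta s t F B Z).
change (Theta s t F B (Mod P pi mu zeta E1)) in th1.
change (Theta s t F B (Mod P pi mu zeta E2)) in th2.
have od0 := T_OD1 nsl th0.
have tm0 := T_term nsl th0.
have nb0 := T_noout nsl th0.
have ndc1 : NoDC s t (Mod P pi mu zeta E1) by case: th1 => ac _ _; apply: acyc_NoDC.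
have ndc2 : NoDC s t (Mod P pi mu zeta E2) by case: th2 => ac _ _; apply: acyc_NoDC.
have ndcZ : NoDC s t Z := ndcM pg ndc1 ndc2.
have odZ : OD1 s Z := odM pg od0 sub.
have outZ : forall u, outb s Z u = outb s zeta u by move=> u; exact: (outM pg u sub).
have tmZ := term ndcZ.
have nbZ : forall u, ~~ outb s Z u = (u \in B) by move=> u; rewrite outZ nb0.
have cFB : #|F| <= #|B|.
  have sF : F \subset om |: [set jn (val i).+1 | i : 'I_d].
    apply/subsetP => x; rewrite inE => /orP [/eqP ->|/existsP [i /eqP ->]].
      by rewrite !inE eqxx.
    by rewrite !inE; apply/orP; right; apply/imsetP; exists i.
  apply: leq_trans (subset_leq_card sF) _.
  rewrite cardsU1 /B cardsU1 lBt /=.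
  apply: leq_add; first exact: leq_b1.
  apply: leq_trans (leq_imset_card _ _) _; rewrite card_ord.
  rewrite hBt card_in_imset.
    have -> : #|[set j : 'I_d.+2 | (0 < val j) && (val j != k)]| = #|~: [set (ord0 : 'I_d.+2); inord k]|.
      apply: eq_card => j; rewrite !inE negb_or -lt0n.
      have -> : (j == inord k) = (val j == k) by rewrite -val_eqE /= inordK // ltnS; case/andP: hk.
      by [].
    have h1 : (ord0 : 'I_d.+2) != inord k.
      by rewrite -val_eqE /= inordK ?ltnS; case/andP: hk => //; rewrite eq_sym -lt0n.
    have := cardsC [set (ord0 : 'I_d.+2); inord k]; rewrite card_ord cards2 h1 /=.
    move=> h; lia.
  move=> a c; rewrite !inE => /andP [a0 ak] /andP [c0 ck] eab.
  have ha := hw (val a) (introT andP (conj a0 (ltn_ord a : val a < d.+2))) ak.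
  have hb' := hw (val c) (introT andP (conj c0 (ltn_ord c : val c < d.+2))) ck.
  apply: val_inj; apply: (@blk_disj d mb _ _ (w (val a))) => //.
    exact: (introT andP (conj a0 (ltn_ord a : val a < d.+2))).
    exact: (introT andP (conj c0 (ltn_ord c : val c < d.+2))).
  by rewrite eab.
have c0 : forall e, inblk d mb 0 (s e) -> inblk d mb 0 (t e).
  move=> e h0; have := ltn_ord (t e); rewrite ltnS => te.
  case: (cover te) => [//|[j hj1 hjt]].
  have := compat e 0 j (leq0n d) hj1; rewrite eq_sym -lt0n; case/andP: (hj1) => -> _.
  by move=> /(_ isT h0); rewrite hjt.
have inv0 : forall (X : {set E}) p (u : 'I_(msum d mb).+1), inblk d mb 0 u -> inblk d mb 0 (iter p (onext s t X) u).
  move=> X p u hu; elim: p => [|p IH] //=.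
  case hp: [pick g in X | s g == iter p (onext s t X) u] => [g|].
    by have [_ sg ->] := onext_pick t hp; apply: c0; rewrite sg.
  by rewrite /onext hp.
have om0 : inblk d mb 0 om.
  have h : bstart mb d.+1 <= msum d mb by rewrite [X in _ <= X]msumE leq_addl.
  by rewrite inblk0 leqnn andbT.
have onlyl : om \notin B -> forall x, x \in B -> inblk d mb 0 x -> x = l.
  move=> omB x; rewrite /B in_setU1 => /orP [/eqP //|xBt] x0.
  move: (xBt); rewrite hBt => /imsetP [j]; rewrite inE => /andP [j0 jk] xe.
  have hj1 : 1 <= val j <= d.+1 by rewrite j0 -ltnS ltn_ord.
  have := hw (val j) hj1 jk; rewrite -xe.
  case: (ltnP (val j) d.+1) => jd.
    by move=> hx; move: (blk0_not (introT andP (conj j0 (jd : val j <= d))) x0); rewrite hx.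
  have -> : val j = d.+1 by apply/eqP; rewrite eqn_leq jd -ltnS ltn_ord.
  rewrite inblk_top => /eqP xm.
  by exfalso; move: omB; rewrite /B in_setU1 orbC -/om (_ : om = x) ?xBt //; apply: val_inj.
have rhoom : rho s t Z om = rho s t zeta om.
  case: (boolP (om \in B)) => omB.
    have oZ : ~~ outb s Z om by rewrite nbZ.
    have o0 : ~~ outb s zeta om by rewrite nb0.
    by rewrite (rho_root t oZ) (rho_root t o0).
  have hZ : rho s t Z om \in B by rewrite -nbZ tmZ.
  have h0 : rho s t zeta om \in B by rewrite -nb0 tm0.
  have e1 := onlyl omB _ hZ (inv0 _ _ _ om0).
  have e2 := onlyl omB _ h0 (inv0 _ _ _ om0).
  exact: (etrans e1 (esym e2)).
have rhoj : forall i : 'I_d, rho s t Z (jn i.+1) = rho s t zeta (jn i.+1).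
  move=> i.
  have hi : 1 <= i.+1 <= d by rewrite ltn_ord.
  have hZ0 : forall e, e \in Z -> ~~ (e \in mustar P pi mu (E1 :|: E2)) -> e \in zeta :\: (E1 :|: E2).
    move=> e; rewrite /Z /Mod in_setU => /orP [h _|h /negP] //.
  have Z0z : zeta :\: (E1 :|: E2) \subset zeta by apply: subsetDl.
  have hY : forall g, g \in Z -> g \in mustar P pi mu (E1 :|: E2) ->
      exists Y, [/\ Theta s t F B Y, g \in Y & zeta :\: (E1 :|: E2) \subset Y].
    move=> g _ gm.
    have sD : forall Ei : {set E}, Ei \subset E1 :|: E2 -> zeta :\: (E1 :|: E2) \subset Mod P pi mu zeta Ei.
      move=> Ei hEi; apply/subsetP => e; rewrite /Mod in_setU !in_setD => /andP [h1 h2].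
      apply/orP; left; rewrite h2 andbT; apply: contra h1; exact: (subsetP hEi).
    move: (gm); rewrite inE => /andP [gn /existsP [e' /andP [e'E e'm]]].
    move: e'E; rewrite in_setU => /orP [e'1|e'2].
      exists (Mod P pi mu zeta E1); split => //; last by apply: sD; apply: subsetUl.
      by rewrite /Mod in_setU; apply/orP; right; rewrite inE gn /=; apply/existsP; exists e'; rewrite e'1.
    exists (Mod P pi mu zeta E2); split => //; last by apply: sD; apply: subsetUr.
    by rewrite /Mod in_setU; apply/orP; right; rewrite inE gn /=; apply/existsP; exists e'; rewrite e'2.
  have hstar : forall (l' : 'I_(msum d mb).+1) (q : seq E), dpath s t (jn i.+1) l' q ->
      has (fun e => e \in mustar P pi mu (E1 :|: E2)) q -> om \in jn i.+1 :: map t q.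
    move=> l' q dp hq.
    have hq' : has (Eneg P pi) q.
      by apply: sub_has hq => e; rewrite inE => /andP [].
    case: (ltnP l' (msum d mb)) => hl.
      exact: star l' hl i.+1 hi q dp hq'.
    have e1 : l' = om by apply: val_inj => /=; apply/eqP; rewrite eqn_leq hl -ltnS ltn_ord.
    rewrite e1 in dp; case/and3P: dp => _ /eqP <- _.
    exact: mem_last.
  have jF : jn i.+1 \in F by rewrite inE; apply/orP; right; apply/existsP; exists i.
  have omF : om \in F by rewrite inE eqxx.
  have jom : jn i.+1 != om.
    apply/negP => /eqP e.
    have := blk_lt hi (hj _ hi); rewrite e /= ltnNge.
    by rewrite [X in _ <= X]msumE leq_addl.
  exact: (jn_part ndcZ od0 outZ hZ0 Z0z hY hstar jF omF jom cFB).
apply: (theta_from nsl odZ tmZ nbZ) => u.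
have hbB : rho s t Z u \in B by rewrite -nbZ tmZ.
case: th0 => _ _ h; have [[w' [w'c w'F]] _] := h (rho s t Z u).
have o0 : ~~ outb s zeta (rho s t Z u) by rewrite nb0.
have r0 : rho s t zeta w' = rho s t Z u.
  move: w'c; rewrite (comp_rho _ od0 tm0) inE (rho_root t o0) => /eqP.
  by [].
have rZ : rho s t Z w' = rho s t zeta w'.
  move: w'F; rewrite inE => /orP [/eqP ->|/existsP [i /eqP ->]]; [exact: rhoom | exact: rhoj].
exists w'; split; last by [].
by rewrite (comp_rho u odZ tmZ) inE rZ r0.
Qed.

Unset Implicit Arguments.
Local Open Scope ring_scope.

Theorem lemma5p3
  (R : comNzRingType) (P : po_ring R)
  (d : nat) (mb : nat -> nat)
  (A : 'M[R]_(msum d mb)) (b : 'cV[R]_(msum d mb))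
  (jn : nat -> 'I_(msum d mb).+1)
  (E : finType) (s t : E -> 'I_(msum d mb).+1) (pi : E -> R) (mu : E -> {set E})
  (k : nat) (Bt : {set 'I_(msum d mb).+1}) (l : 'I_(msum d mb).+1)
  (zeta E1 E2 : {set E}) :
  (* block structure of A and b *)
  (forall i, (1 <= i <= d)%N -> forall r c : 'I_(msum d mb),
      inblk d mb i r -> ~~ inblk d mb i c -> A r c = 0) ->
  (forall i, (1 <= i <= d)%N -> forall r1 r2 : 'I_(msum d mb),
      inblk d mb i r1 -> inblk d mb i r2 -> b r1 0 != 0 -> b r2 0 != 0 -> r1 = r2) ->
  (* j_i in N_i and b_j = 0 for j <= m - m_0 outside {j_1..j_d} *)
  (forall i, (1 <= i <= d)%N -> inblk d mb i (jn i)) ->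
  (forall r : 'I_(msum d mb), (r < msum d mb - mb 0%N)%N ->
      (forall i, (1 <= i <= d)%N -> val r != val (jn i)) -> b r 0 = 0) ->
  (* no self-loops *)
  (forall e, s e != t e) ->
  (* A-compatibility (i) *)
  (forall e (i j : nat), (i <= d)%N -> (1 <= j <= d)%N -> i != j ->
      inblk d mb i (s e) -> ~~ inblk d mb j (t e)) ->
  (* A-compatibility (ii) *)
  (forall r : 'I_(msum d mb), widen_ord (leqnSn _) r \notin Fset d jn ->
      (forall c : 'I_(msum d mb),
         laplacian s t pi (widen_ord (leqnSn _) r) (widen_ord (leqnSn _) c) = A r c) /\
      laplacian s t pi (widen_ord (leqnSn _) r) ord_max = b r 0) ->
  (* P-graph *)
  is_Pgraph P s t pi mu ->
  (* condition ( * ) *)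
  (forall (l' : 'I_(msum d mb).+1), (l' < msum d mb)%N ->
      forall i, (1 <= i <= d)%N -> forall p, dpath s t (jn i) l' p ->
      has (Eneg P pi) p -> ord_max \in jn i :: map t p) ->
  (* Bt in B^k *)
  (1 <= k <= d.+1)%N ->
  (exists w : nat -> 'I_(msum d mb).+1,
      (forall j, (1 <= j <= d.+1)%N -> j != k -> inblk d mb j (w j)) /\
      Bt = [set w (val j) | j : 'I_d.+2 & (0 < val j)%N && (val j != k)]) ->
  l \notin Bt ->
  Theta s t (Fset d jn) (l |: Bt) zeta ->
  (* E1, E2 in E^F_zeta *)
  (E1 \subset zeta :&: immu P pi mu /\
     Theta s t (Fset d jn) (l |: Bt) ((zeta :\: E1) :|: mustar P pi mu E1)) ->
  (E2 \subset zeta :&: immu P pi mu /\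
     Theta s t (Fset d jn) (l |: Bt) ((zeta :\: E2) :|: mustar P pi mu E2)) ->
  (E1 :|: E2 \subset zeta :&: immu P pi mu /\
     Theta s t (Fset d jn) (l |: Bt) ((zeta :\: (E1 :|: E2)) :|: mustar P pi mu (E1 :|: E2))).
Proof.
exact: core5p3.
Qed.
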